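(* For $g\geq1$, the level-2 principal congruence subgroup $\Gamma_2(g)$ is the normal closure in $\mathrm{GL}(g,\mathbb{Z})$ of $F_1$.
   Context: $\Gamma_2(g)$ is the kernel of the reduction homomorphism $\mathrm{GL}(g,\mathbb{Z})\to\mathrm{GL}(g,\mathbb{Z}/2\mathbb{Z})$. $F_1=I_g-2\mathcal{E}_{1,1}$ is the diagonal matrix $\mathrm{diag}(-1,1,\dots,1)$, where $\mathcal{E}_{1,1}$ has $(1,1)$-entry $1$ and all other entries $0$. *)

(* Defs.v *)
From mathcomp Require Import all_boot all_order all_algebra.
Set Implicit Arguments. Unset Strict Implicit. Unset Printing Implicit Defensive.
Import GRing.Theory Num.Theory.
Local Open Scope ring_scope.

Definition GLZ (g : nat) (A : 'M[int]_g) : Prop := A \in unitmx.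

Definition red2 (g : nat) (A : 'M[int]_g) : 'M['Z_2]_g :=
  map_mx (fun z : int => z%:~R : 'Z_2) A.

Definition Gamma2 (g : nat) (A : 'M[int]_g) : Prop :=
  GLZ A /\ red2 A = 1%:M.

(* F_1 = I_g - 2 E_{1,1} = diag(-1,1,...,1) *)
Definition F1 (g : nat) : 'M[int]_g :=
  \matrix_(i, j) (if i == j then (if nat_of_ord i == 0%N then -1 else 1) else 0).

Inductive gen_subgroup (g : nat) (X : 'M[int]_g -> Prop) : 'M[int]_g -> Prop :=
  | gs_gen x : X x -> gen_subgroup X x
  | gs_one : gen_subgroup X 1%:M
  | gs_mul a b : gen_subgroup X a -> gen_subgroup X b -> gen_subgroup X (a *m b)
  | gs_inv a : gen_subgroup X a -> gen_subgroup X (invmx a).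

Definition normal_closure (g : nat) (x : 'M[int]_g) : 'M[int]_g -> Prop :=
  gen_subgroup (fun y => exists P, GLZ P /\ y = P *m x *m invmx P).

(* Main.v *)
Require Import Defs.
From mathcomp Require Import all_boot all_order all_algebra zify ring.
Import GRing.Theory Num.Theory.
Set Implicit Arguments. Unset Strict Implicit. Unset Printing Implicit Defensive.
Local Open Scope ring_scope.

Definition Fm g (i : 'I_g) : 'M[int]_g :=
  \matrix_(r, s) (if r == s then (if r == i then -1 else 1) else 0).
Definition Em g (i j : 'I_g) (c : int) : 'M[int]_g :=
  \matrix_(r, s) ((r == s)%:R + (r == i)%:R * (s == j)%:R * c).

Lemma mulFm_l g (i : 'I_g) (A : 'M[int]_g) r s :
  (Fm i *m A) r s = if r == i then - A r s else A r s.
Proof.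
rewrite !mxE (bigD1 r) //= mxE eqxx big1 ?addr0.
  by case: (r == i); rewrite ?mulN1r ?mul1r.
by move=> l nl; rewrite mxE eq_sym (negbTE nl) mul0r.
Qed.

Lemma mulFm_r g (i : 'I_g) (A : 'M[int]_g) r s :
  (A *m Fm i) r s = if s == i then - A r s else A r s.
Proof.
rewrite !mxE (bigD1 s) //= mxE eqxx big1 ?addr0.
  by case: (s == i); rewrite ?mulrN1 ?mulr1.
by move=> l nl; rewrite mxE (negbTE nl) mulr0.
Qed.

Lemma mulEm_l g (i j : 'I_g) c (A : 'M[int]_g) r s :
  (Em i j c *m A) r s = A r s + (r == i)%:R * c * A j s.
Proof.
rewrite !mxE.
under eq_bigr do rewrite mxE mulrDl.
rewrite big_split /= (bigD1 r) //= eqxx mul1r big1 ?addr0; last first.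
  by move=> l nl; rewrite eq_sym (negbTE nl) mul0r.
congr (_ + _).
rewrite (bigD1 j) //= eqxx mulr1 big1 ?addr0; first by rewrite mulrAC.
by move=> l nl; rewrite (negbTE nl) mulr0 mul0r mul0r.
Qed.

Lemma mulEm_r g (i j : 'I_g) c (A : 'M[int]_g) r s :
  (A *m Em i j c) r s = A r s + (s == j)%:R * c * A r i.
Proof.
rewrite !mxE.
under eq_bigr do rewrite mxE mulrDr.
rewrite big_split /= (bigD1 s) //= eqxx mulr1 big1 ?addr0; last first.
  by move=> l nl; rewrite (negbTE nl) mulr0.
congr (_ + _).
rewrite (bigD1 i) //= eqxx mul1r big1 ?addr0; first by rewrite mulrC -mulrA mulrC.
by move=> l nl; rewrite (negbTE nl) mul0r mul0r mulr0.
Qed.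

Lemma inv_of g (A B : 'M[int]_g) : A *m B = 1%:M -> invmx A = B.
Proof.
move=> h; have [uA _] := mulmx1_unit h.
by rewrite -[invmx A]mulmx1 -h mulmxA mulVmx // mul1mx.
Qed.

Lemma EmK g (i j : 'I_g) c : i != j -> Em i j c *m Em i j (- c) = 1%:M.
Proof.
move=> nij; apply/matrixP => r s; rewrite mulEm_l !mxE.
rewrite [j == i]eq_sym (negbTE nij) [j == s]eq_sym.
rewrite mul0r mul0r addr0; ring.
Qed.

Lemma FmK g (i : 'I_g) : Fm i *m Fm i = 1%:M.
Proof.
apply/matrixP => r s; rewrite mulFm_l !mxE.
by case: (r == s); case: (r == i); rewrite ?opprK ?oppr0.
Qed.

Lemma F1E g (hg : (1 <= g)%N) : F1 g = Fm (Ordinal hg).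
Proof. by apply/matrixP => r s; rewrite !mxE. Qed.

Lemma red2M g (A B : 'M[int]_g) : red2 (A *m B) = red2 A *m red2 B.
Proof. by rewrite /red2 map_mxM. Qed.

Lemma red21 g : red2 (1%:M : 'M[int]_g) = 1%:M.
Proof. by rewrite /red2 map_mx1. Qed.
Lemma F1unit g : F1 g \in unitmx.
Proof.
have h : F1 g *m F1 g = 1%:M.
  apply/matrixP => r s; rewrite !mxE (bigD1 r) //= !mxE eqxx big1 ?addr0.
    by case: (r == s); case: (nat_of_ord r == 0%N); rewrite ?mulN1r ?mul1r ?opprK ?oppr0.
  by move=> l nl; rewrite !mxE eq_sym (negbTE nl) mul0r.
by case: (mulmx1_unit h).
Qed.

Lemma N_unit g (x : 'M[int]_g) : normal_closure (F1 g) x -> x \in unitmx.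
Proof.
elim => [y [P [uP ->]]| |a b _ ua _ ub|a _ ua].
- by rewrite !unitmx_mul uP F1unit unitmx_inv uP.
- by rewrite unitmx1.
- by rewrite unitmx_mul ua ub.
- by rewrite unitmx_inv.
Qed.

Lemma N_cancel_l g (B A : 'M[int]_g) : normal_closure (F1 g) B ->
  normal_closure (F1 g) (B *m A) -> normal_closure (F1 g) A.
Proof.
move=> hB hBA; have uB := N_unit hB.
rewrite -(mulKmx uB A); apply: gs_mul => //; exact: gs_inv.
Qed.

Lemma N_cancel_r g (C A : 'M[int]_g) : normal_closure (F1 g) C ->
  normal_closure (F1 g) (A *m C) -> normal_closure (F1 g) A.
Proof.
move=> hC hAC; have uC := N_unit hC.
rewrite -(mulmxK uC A); apply: gs_mul => //; exact: gs_inv.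
Qed.

Lemma Gamma2_mul g (A B : 'M[int]_g) : Gamma2 A -> Gamma2 B -> Gamma2 (A *m B).
Proof.
move=> [uA rA] [uB rB]; split; first by rewrite /GLZ unitmx_mul uA uB.
by rewrite red2M rA rB mulmx1.
Qed.

Lemma Gamma2_inv g (A : 'M[int]_g) : Gamma2 A -> Gamma2 (invmx A).
Proof.
move=> [uA rA]; split; first by rewrite /GLZ unitmx_inv.
by rewrite -[red2 _]mul1mx -rA -red2M mulmxV // red21.
Qed.

Lemma N_Gamma2 g (x : 'M[int]_g) : normal_closure (F1 g) x -> Gamma2 x.
Proof.
elim => [y [P [uP ->]]| |a b _ ua _ ub|a _ ua].
- split; first by rewrite /GLZ !unitmx_mul uP F1unit unitmx_inv uP.
  rewrite !red2M.
  have -> : red2 (F1 g) = 1%:M.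
    apply/matrixP => r s; rewrite !mxE.
    case: (r == s) => //; case: (nat_of_ord r == 0%N) => //.
    by rewrite rmorphN1; apply/eqP.
  by rewrite mulmx1 -red2M mulmxV // red21.
- by split; [rewrite /GLZ unitmx1 | rewrite red21].
- exact: Gamma2_mul.
- exact: Gamma2_inv.
Qed.
Lemma TT g (a b : 'I_g) : (tperm_mx a b : 'M[int]_g) *m tperm_mx a b = 1%:M.
Proof.
rewrite -xrowE; apply/matrixP => r s.
by rewrite /xrow /row_perm !mxE perm.tpermK.
Qed.

Lemma TFT g (hg : (1 <= g)%N) (k : 'I_g) :
  tperm_mx (Ordinal hg) k *m F1 g *m tperm_mx (Ordinal hg) k = Fm k.
Proof.
rewrite -xrowE -xcolE F1E; apply/matrixP => r s.
rewrite /xcol /xrow /col_perm /row_perm !mxE.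
rewrite (inj_eq perm.perm_inj).
case: (r == s) => //.
by rewrite (canF_eq (perm.tpermK _ _)) perm.tpermL.
Qed.

Lemma N_Fm g (hg : (1 <= g)%N) (k : 'I_g) : normal_closure (F1 g) (Fm k).
Proof.
apply: gs_gen; exists (tperm_mx (Ordinal hg) k); split.
  by case: (mulmx1_unit (TT (Ordinal hg) k)).
by rewrite (inv_of (TT _ _)) TFT.
Qed.

Lemma FEF g (i j : 'I_g) : i != j ->
  Fm i *m (Em j i 1 *m Fm i *m Em j i (-1)) = Em j i (-2).
Proof.
move=> nij; apply/matrixP => r s.
rewrite mulFm_l !mulEm_r !mulFm_r !mxE [j == i]eq_sym (negbTE nij).
have [->|nsi] := eqVneq s i; rewrite ?eqxx ?(negbTE nsi) /=;
have [->|nri] := eqVneq r i; rewrite ?eqxx ?(negbTE nri) ?(negbTE nij) /=;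
rewrite ?[i == s]eq_sym ?(negbTE nsi); try ring.
all: by rewrite ?mul0r ?mulr0 ?addr0 ?oppr0.
Qed.

Lemma N_Em g (hg : (1 <= g)%N) (i j : 'I_g) : i != j ->
  normal_closure (F1 g) (Em j i (-2)) /\ normal_closure (F1 g) (Em j i 2).
Proof.
move=> nij; have nji : j != i by rewrite eq_sym.
have hN : normal_closure (F1 g) (Em j i (-2)).
  rewrite -(FEF nij); apply: gs_mul; first exact: N_Fm.
  apply: gs_gen; exists (Em j i 1 *m tperm_mx (Ordinal hg) i).
  have hinv : (Em j i 1 *m tperm_mx (Ordinal hg) i) *m
              (tperm_mx (Ordinal hg) i *m Em j i (-1)) = 1%:M.
    by rewrite mulmxA -(mulmxA (Em _ _ _)) TT mulmx1 EmK.
  split; first by case: (mulmx1_unit hinv).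
  rewrite (inv_of hinv) -TFT.
  by rewrite !mulmxA.
split=> //.
have <- : invmx (Em j i (-2)) = Em j i 2.
  by apply: inv_of; rewrite -{2}(opprK 2) EmK.
exact: gs_inv.
Qed.
Lemma red_step (x y : int) : (0 < absz y)%N -> (absz y < absz x)%N ->
  exists c : int, (c = 2 \/ c = -2) /\ (absz (x + c * y)%R < absz x)%N.
Proof.
move=> h1 h2.
case: (lerP 0 x) => hx; case: (lerP 0 y) => hy.
- by exists (-2); split; [right|lia].
- by exists 2; split; [left|lia].
- by exists 2; split; [left|lia].
- by exists (-2); split; [right|lia].
Qed.
Lemma red_step1 (x : int) : x != 0 -> absz x != 1%N ->
  exists c : int, (c = 2 \/ c = -2) /\ (absz (x + c)%R < absz x)%N.
Proof.
move=> h1 h2.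
case: (lerP 0 x) => hx.
- by exists (-2); split; [right|lia].
- by exists 2; split; [left|lia].
Qed.
Lemma z2_neq (x y : int) : (x%:~R : 'Z_2) = 0 -> (y%:~R : 'Z_2) = 1 -> absz x != absz y.
Proof.
move=> hx hy; apply/negP => /eqP h.
have : x = y \/ x = - y by lia.
case=> e; move: hx; rewrite e ?mulrNz hy //; by move/eqP.
Qed.
Lemma z2_ne1 (x : int) : (x%:~R : 'Z_2) = 0 -> absz x != 1%N.
Proof.
move=> hx; apply/negP => /eqP h.
have : x = 1 \/ x = - 1 by lia.
by case=> e; move: hx; rewrite e ?mulrNz => /eqP.
Qed.
Lemma z2_ne0 (x : int) : (x%:~R : 'Z_2) = 1 -> x != 0.
Proof. by move=> hx; apply/negP => /eqP e; move: hx; rewrite e rmorph0 => /eqP. Qed.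
Lemma unit_int (x : int) : x \is a GRing.unit -> x = 1 \/ x = -1.
Proof. move=> h; lia. Qed.
Definition Qk g (k : nat) (A : 'M[int]_g) :=
  forall r s : 'I_g, ((r < k)%N || (s < k)%N) -> A r s = (r == s)%:R.

Lemma G2E g (A : 'M[int]_g) r s : Gamma2 A -> ((A r s)%:~R : 'Z_2) = (r == s)%:R.
Proof. by move=> [_ h]; have := congr1 (fun M : 'M['Z_2]_g => M r s) h; rewrite !mxE. Qed.

Lemma sum_lt g (f f' : 'I_g -> nat) p : (f' p < f p)%N ->
  (forall r, r != p -> f' r = f r) -> (\sum_r f' r < \sum_r f r)%N.
Proof.
move=> hp he; rewrite (bigD1 p) //= [X in (_ < X)%N](bigD1 p) //=.
by rewrite (eq_bigr _ (fun r hr => he r hr)) ltn_add2r.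
Qed.

Lemma rowop_step g (hg : (1 <= g)%N) k (hk : (k < g)%N) (A : 'M[int]_g) (p q : 'I_g) (c : int) :
  p != q -> ~~ (p < k)%N -> ~~ (q < k)%N -> (c = 2 \/ c = -2) -> Gamma2 A -> Qk k A ->
  (absz (A p (Ordinal hk) + c * A q (Ordinal hk))%R < absz (A p (Ordinal hk)))%N ->
  [/\ normal_closure (F1 g) (Em p q c), Gamma2 (Em p q c *m A), Qk k (Em p q c *m A) &
   (\sum_r absz ((Em p q c *m A) r (Ordinal hk)) < \sum_r absz (A r (Ordinal hk)))%N].
Proof.
move=> npq hp hq hc G Q hlt.
have hN : normal_closure (F1 g) (Em p q c).
  have nqp : q != p by rewrite eq_sym.
  by case: hc => ->; case: (N_Em hg nqp).
split=> //.
- exact: Gamma2_mul (N_Gamma2 hN) G.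
- move=> r s hrs; rewrite mulEm_l Q //.
  case/orP: hrs => h.
    have -> : (r == p) = false by apply/negbTE; apply: contraNneq hp => <-.
    by rewrite mul0r mul0r addr0.
  rewrite (Q q s); last by rewrite h orbT.
  have -> : (q == s) = false by apply/negbTE; apply: contraNneq hq => ->.
  by rewrite mulr0 addr0.
- apply: (sum_lt (p := p)); first by rewrite mulEm_l eqxx mul1r.
  by move=> r nrp; rewrite mulEm_l (negbTE nrp) mul0r mul0r addr0.
Qed.
Lemma phase3 g (hg : (1 <= g)%N) k (hk : (k < g)%N) :
  (forall A, Gamma2 A -> Qk k.+1 A -> normal_closure (F1 g) A) ->
  forall m (A : 'M[int]_g), Gamma2 A -> Qk k A ->
  (forall i, A i (Ordinal hk) = (i == Ordinal hk)%:R) ->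
  (\sum_j absz (A (Ordinal hk) j) < m)%N -> normal_closure (F1 g) A.
Proof.
move=> IH; set kk := Ordinal hk.
elim=> [|m IHm] A G Q col hm; first by [].
case: (pickP (fun j => (j != kk) && (A kk j != 0))) => [j /andP[njk nz]|none].
- have e0 : ((A kk j)%:~R : 'Z_2) = 0 by rewrite (G2E _ _ G) eq_sym (negbTE njk).
  have [c [hc hlt]] := red_step1 nz (z2_ne1 e0).
  have hN : normal_closure (F1 g) (Em kk j c).
    by case: hc => ->; case: (N_Em hg njk).
  have njk' : (kk == j) = false by rewrite eq_sym (negbTE njk).
  apply: (N_cancel_r hN); apply: IHm.
  + exact: Gamma2_mul G (N_Gamma2 hN).
  + move=> r s hrs; rewrite mulEm_r col Q //.
    have [esj|nsj] := eqVneq s j; last by rewrite mul0r mul0r addr0.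
    have [erk|nrk] := eqVneq r kk; last by rewrite mulr0 addr0.
    exfalso; move: hrs; rewrite erk esj /= ltnn /= => hjk.
    have := Q kk j; rewrite hjk orbT => /(_ isT); rewrite njk' => e.
    by rewrite e eqxx in nz.
  + by move=> i; rewrite mulEm_r col njk' mul0r mul0r addr0.
  + rewrite -ltnS; apply: (leq_trans _ hm); rewrite ltnS; apply: (sum_lt (p := j)).
      by rewrite mulEm_r eqxx mul1r col eqxx mulr1.
    by move=> r nrj; rewrite mulEm_r (negbTE nrj) mul0r mul0r addr0.
- apply: IH => //; move=> r s hrs.
  case/orP: (orbN ((r < k)%N || (s < k)%N)) => [h|h]; first exact: Q.
  rewrite negb_or in h; case/andP: h => hr hs.
  case/orP: hrs => h.
  + have erk : r = kk by apply: val_inj => /=; lia.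
    rewrite erk; have [esk|nsk] := eqVneq s kk; first by rewrite esk col eqxx.
    by have := none s; rewrite /= nsk /= => /negbFE/eqP ->.
  + have esk : s = kk by apply: val_inj => /=; lia.
    by rewrite esk col.
Qed.

Lemma phase1 g (hg : (1 <= g)%N) k (hk : (k < g)%N) :
  (forall A, Gamma2 A -> Qk k.+1 A -> normal_closure (F1 g) A) ->
  forall m (A : 'M[int]_g), Gamma2 A -> Qk k A ->
  (\sum_i absz (A i (Ordinal hk)) < m)%N -> normal_closure (F1 g) A.
Proof.
move=> IH; set kk := Ordinal hk.
have kkk : ~~ (kk < k)%N by rewrite /= ltnn.
elim=> [|m IHm] A G Q hm; first by [].
case: (pickP (fun i => (i != kk) && (A i kk != 0))) => [i /andP[nik nz]|none].
- have ik : ~~ (i < k)%N.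
    apply/negP => h; have := Q i kk; rewrite h => /(_ isT) e.
    by rewrite e (negbTE nik) eqxx in nz.
  have ex : ((A i kk)%:~R : 'Z_2) = 0 by rewrite (G2E _ _ G) (negbTE nik).
  have ey : ((A kk kk)%:~R : 'Z_2) = 1 by rewrite (G2E _ _ G) eqxx.
  have hne := z2_neq ex ey.
  have nz' : (0 < absz (A i kk))%N by rewrite absz_gt0.
  have ny : (0 < absz (A kk kk))%N by rewrite absz_gt0 (z2_ne0 ey).
  case: (ltngtP (absz (A kk kk)) (absz (A i kk))) => hxy; last by rewrite hxy eqxx in hne.
  + have [c [hc hlt]] := red_step ny hxy.
    have [hN G' Q' lt'] := rowop_step (hk := hk) hg nik ik kkk hc G Q hlt.
    apply: (N_cancel_l hN); apply: IHm => //.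
    by rewrite -ltnS; apply: (leq_trans _ hm); rewrite ltnS.
  + have [c [hc hlt]] := red_step nz' hxy.
    have nki : kk != i by rewrite eq_sym.
    have [hN G' Q' lt'] := rowop_step (hk := hk) hg nki kkk ik hc G Q hlt.
    apply: (N_cancel_l hN); apply: IHm => //.
    by rewrite -ltnS; apply: (leq_trans _ hm); rewrite ltnS.
- have colz : forall i, i != kk -> A i kk = 0.
    by move=> i nik; move: (none i); rewrite /= nik /= => /negbFE/eqP.
  have hdet : \det A = A kk kk * cofactor A kk kk.
    rewrite (expand_det_col A kk) (bigD1 kk) //= big1 ?addr0 // => i nik.
    by rewrite colz // mul0r.
  have := G.1; rewrite /GLZ unitmxE hdet unitrM => /andP[u _].
  case: (unit_int u) => hu.
  + apply: (phase3 hg IH (m := (\sum_j absz (A kk j)).+1)) => //.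
    move=> i; have [->|nik] := eqVneq i kk; first by rewrite hu ?eqxx.
    by rewrite colz // ?(negbTE nik).
  + have hN := N_Fm hg kk.
    apply: (N_cancel_l hN).
    apply: (phase3 hg IH (m := (\sum_j absz ((Fm kk *m A) kk j)).+1)) => //.
    * exact: Gamma2_mul (N_Gamma2 hN) G.
    * move=> r s hrs; rewrite mulFm_l Q //.
      have [erk|nrk] := eqVneq r kk => //.
      rewrite erk in hrs *; rewrite /= ltnn /= in hrs.
      have -> : (kk == s) = false.
        by apply/negbTE; apply: contraTneq hrs => <-; rewrite ltnn.
      by rewrite oppr0.
    * move=> i; rewrite mulFm_l; have [->|nik] := eqVneq i kk.
        by rewrite hu opprK ?eqxx.
      by rewrite colz // ?(negbTE nik).
Qed.

Lemma mainlem g (hg : (1 <= g)%N) : forall n (A : 'M[int]_g),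
  Gamma2 A -> Qk (g - n) A -> normal_closure (F1 g) A.
Proof.
elim=> [|n IHn] A G Q.
- have -> : A = 1%:M.
    by apply/matrixP => r s; rewrite Q ?mxE // subn0 ltn_ord.
  exact: gs_one.
- case: (ltnP n g) => hn.
  + have hk : (g - n.+1 < g)%N by lia.
    have e : ((g - n.+1).+1 = g - n)%N by lia.
    apply: (phase1 hg (hk := hk) _ (m := (\sum_i absz (A i (Ordinal hk))).+1)) => //.
    by move=> B GB QB; apply: IHn => //; rewrite -e.
  + apply: IHn => //; have -> : (g - n = g - n.+1)%N by lia.
    done.
Qed.

Unset Implicit Arguments.

Theorem lemma3p4 (g : nat) (hg : (1 <= g)%N) (A : 'M[int]_g) :
  Gamma2 A <-> normal_closure (F1 g) A.
Proof.
split; last exact: N_Gamma2.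
move=> G; apply: (@mainlem g hg g A G).
by rewrite subnn.
Qed.
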